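(* Let $D$ be an integral domain and let $M$ be a torsion-free $D$-module which is a $w$-module. Then the following are equivalent: (1) $M$ is an SM-module; (2) $M$ is a $P$-SM-module for all prime $w$-ideals $P$ of $D$; (3) $M$ is an $\mathfrak{m}$-SM-module for all maximal $w$-ideals $\mathfrak{m}$ of $D$.
   Context: Let $K$ be the quotient field of $D$; $I_v=(I^{-1})^{-1}$ with $I^{-1}=\{a\in K\mid aI\subseteq D\}$; $\mathrm{GV}(D)$ is the set of finitely generated ideals $J$ with $J_v=D$. For a torsion-free module $N$, $N_w=\{x\in N\otimes K\mid xJ\subseteq N\text{ for some }J\in\mathrm{GV}(D)\}$; $N$ is a $w$-module if $N_w=N$; a $w$-ideal is an ideal that is a $w$-module; maximal $w$-ideals are proper $w$-ideals maximal among proper $w$-ideals. A $w$-module $M$ is an SM-module (strong Mori module) if it satisfies the ascending chain condition on $w$-submodules, equivalently every $w$-submodule $L$ is $w$-finite ($L=F_w$ for some finitely generated $F$). For a multiplicative set $S$, a submodule $N$ is $S$-$w$-finite if there exist $s\in S$ and a finitely generated submodule $F$ of $M$ with $Ns\subseteq F_w\subseteq N_w$, and $M$ is an $S$-SM-module if every $w$-submodule is $S$-$w$-finite. For a prime ideal $P$, $M$ is a $P$-SM-module if it is a $(D\setminus P)$-SM-module. *)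

(* Defs.v *)
From mathcomp Require Import all_boot all_order all_algebra.
From mathcomp Require Import fraction.
Set Implicit Arguments. Unset Strict Implicit. Unset Printing Implicit Defensive.
Import GRing.Theory.
Local Open Scope ring_scope.

(* A torsion-free D-module M is represented inside the K-vector space V
   (playing the role of M (x) K) as a D-submodule M : V -> Prop.
   Subsets are predicates T -> Prop. *)

Section WTheory.
Variable D : idomainType.
Local Notation K := {fraction D}.
Local Notation inK := (@FracField.tofrac D).

Definition is_ideal (I : D -> Prop) : Prop :=
  [/\ I 0, (forall a b, I a -> I b -> I (a + b)) & (forall d a, I a -> I (d * a))].

Definition gen_ideal (s : seq D) : D -> Prop :=
  fun x => exists c : 'I_(size s) -> D, x = \sum_(i < size s) c i * s`_i.

Definition frac_inv (I : D -> Prop) : K -> Prop :=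
  fun a => forall x, I x -> exists d : D, a * inK x = inK d.

Definition v_closure (I : D -> Prop) : K -> Prop :=
  fun b => forall a, frac_inv I a -> exists d : D, b * a = inK d.

Definition isGV (s : seq D) : Prop :=
  forall b : K, v_closure (gen_ideal s) b <-> exists d : D, b = inK d.

Definition ideal_wcl (I : D -> Prop) : K -> Prop :=
  fun x => exists s, isGV s /\
    forall j, gen_ideal s j -> exists p, I p /\ x * inK j = inK p.

Definition is_wideal (I : D -> Prop) : Prop :=
  is_ideal I /\ forall x : K, ideal_wcl I x <-> exists p, I p /\ x = inK p.

Definition is_prime_wideal (P : D -> Prop) : Prop :=
  [/\ is_wideal P, ~ P 1 & forall a b, P (a * b) -> P a \/ P b].

Definition is_max_wideal (P : D -> Prop) : Prop :=
  [/\ is_wideal P, ~ P 1 &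
     forall Q : D -> Prop, is_wideal Q -> ~ Q 1 ->
       (forall x, P x -> Q x) -> forall x, Q x -> P x].

Variable V : lmodType K.

Definition is_Dsubmod (N : V -> Prop) : Prop :=
  [/\ N 0, (forall x y, N x -> N y -> N (x + y))
         & (forall d x, N x -> N (inK d *: x))].

Definition wcl (N : V -> Prop) : V -> Prop :=
  fun x => exists s, isGV s /\ forall j, gen_ideal s j -> N (inK j *: x).

Definition is_wmod (N : V -> Prop) : Prop :=
  is_Dsubmod N /\ forall x, wcl N x <-> N x.

Definition is_wsubmod (M L : V -> Prop) : Prop :=
  is_wmod L /\ forall x, L x -> M x.

Definition span_fg (g : seq V) : V -> Prop :=
  fun x => exists c : 'I_(size g) -> D, x = \sum_(i < size g) inK (c i) *: g`_i.

Definition is_SM (M : V -> Prop) : Prop :=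
  is_wmod M /\
  forall L : nat -> V -> Prop,
    (forall n, is_wsubmod M (L n)) ->
    (forall n x, L n x -> L n.+1 x) ->
    exists n0, forall n, (n0 <= n)%N -> forall x, L n x <-> L n0 x.

Definition is_mult_set (S : D -> Prop) : Prop :=
  S 1 /\ forall a b, S a -> S b -> S (a * b).

Definition S_w_finite (S : D -> Prop) (M N : V -> Prop) : Prop :=
  exists s, S s /\ exists g : seq V, (forall v, v \in g -> M v) /\
    (forall x, N x -> wcl (span_fg g) (inK s *: x)) /\
    (forall x, wcl (span_fg g) x -> wcl N x).

Definition is_S_SM (S : D -> Prop) (M : V -> Prop) : Prop :=
  is_wmod M /\ forall L, is_wsubmod M L -> S_w_finite S M L.

Definition is_P_SM (P : D -> Prop) (M : V -> Prop) : Prop :=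
  is_S_SM (fun d => ~ P d) M.

End WTheory.

(* Main.v *)
Require Import Defs.
From mathcomp Require Import all_boot all_order all_algebra.
From mathcomp Require Import fraction.
From mathcomp Require classical_sets.
From Stdlib Require Import Classical ClassicalEpsilon FunctionalExtensionality PropExtensionality.
Set Implicit Arguments. Unset Strict Implicit. Unset Printing Implicit Defensive.
Import GRing.Theory.
Local Open Scope ring_scope.

Section Aux.
Variable D : idomainType.
Local Notation K := {fraction D}.
Local Notation inK := (@FracField.tofrac D).

Definition isD (z : K) := exists d : D, z = inK d.

Lemma inK_inj (a b : D) : inK a = inK b -> a = b.
Proof. by move=> h; apply/eqP; rewrite -tofrac_eq h. Qed.

Lemma isDM (a b : K) : isD a -> isD b -> isD (a * b).
Proof. by move=> [x ->] [y ->]; exists (x * y); rewrite tofracM. Qed.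

Lemma gen_ideal_ind (P : D -> Prop) (s : seq D) :
  P 0 -> (forall a b, P a -> P b -> P (a + b)) ->
  (forall d y, y \in s -> P (d * y)) -> forall x, gen_ideal s x -> P x.
Proof.
move=> P0 PD Py x [c ->]; elim/big_ind: _ => // i _.
by apply: Py; apply: mem_nth.
Qed.

Lemma gen_mem (s : seq D) y : y \in s -> gen_ideal s y.
Proof.
move=> ys; have lt : (index y s < size s)%N by rewrite index_mem.
exists (fun i : 'I_(size s) => ((i : nat) == index y s)%:R).
rewrite (bigD1 (Ordinal lt)) //= eqxx mul1r big1 ?addr0 ?nth_index //.
move=> i /eqP ne; suff -> : ((i : nat) == index y s) = false by rewrite mul0r.
by apply/negbTE; apply: contra_not_neq ne => h; apply: val_inj.
Qed.


Lemma ideal_gen (I : D -> Prop) s : is_ideal I -> (forall y, y \in s -> I y) ->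
  forall x, gen_ideal s x -> I x.
Proof. move=> [I0 ID IM] Hs; apply: gen_ideal_ind => // d y ys; exact/IM/Hs. Qed.

Lemma GV_char (s : seq D) :
  isGV s <-> (forall a, (forall y, y \in s -> isD (a * inK y)) -> isD a).
Proof.
split.
- move=> gv a Ha.
  have hinv : frac_inv (gen_ideal s) a.
    move=> x; apply: (gen_ideal_ind (P := fun x => exists d, a * inK x = inK d)).
    + by exists 0; rewrite tofrac0 mulr0.
    + by move=> p q [u hu] [v hv]; exists (u + v); rewrite tofracD mulrDr hu hv tofracD.
    + move=> d y ys; have [u hu] := Ha y ys; exists (d * u).
      by rewrite tofracM mulrCA hu tofracM.
  have [_ h1] := gv 1; have [d hd] := h1 (ex_intro _ 1 (esym (tofrac1 D))) a hinv.
  by exists d; rewrite -hd mul1r.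
- move=> H b; split.
  + move=> hb; have [d hd] := hb 1 (fun x _ => ex_intro _ x (mul1r _)).
    by exists d; rewrite -hd mulr1.
  + move=> [d ->] a ha.
    have [e ->] : isD a by apply: H => y ys; apply: ha; exact: gen_mem.
    by exists (d * e); rewrite tofracM.
Qed.

Lemma GV1 : isGV [:: (1 : D)].
Proof.
apply/GV_char => a Ha; have := Ha 1 (mem_head _ _).
by rewrite tofrac1 mulr1.
Qed.

Lemma GVmul (s1 s2 : seq D) : isGV s1 -> isGV s2 ->
  isGV [seq x * y | x <- s1, y <- s2].
Proof.
move=> /GV_char g1 /GV_char g2; apply/GV_char => a Ha.
apply: g1 => x xs; apply: g2 => y ys.
by rewrite -mulrA -tofracM; apply: Ha; apply: allpairs_f.
Qed.

Lemma collect (R : D -> D -> Prop) (s1 : seq D) :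
  (forall y u d, R y u -> R y (d * u)) ->
  (forall y, y \in s1 -> exists T, isGV T /\ forall u, u \in T -> R y u) ->
  exists T, isGV T /\ forall y, y \in s1 -> forall u, u \in T -> R y u.
Proof.
move=> RM; elim: s1 => [|y s IH] H.
  by exists [:: 1]; split; [exact: GV1|].
have [T1 [g1 h1]] := H y (mem_head _ _).
have [T2 [g2 h2]] : exists T, isGV T /\ forall y, y \in s -> forall u, u \in T -> R y u.
  by apply: IH => z zs; apply: H; rewrite inE zs orbT.
exists [seq a * b | a <- T1, b <- T2]; split; first exact: GVmul.
move=> z; rewrite inE => /orP [/eqP -> | zs] u /allpairsP [[a b] [/= ha hb ->]].
- by rewrite mulrC; apply: RM; apply: h1.
- by apply: RM; apply: h2.
Qed.

Lemma gen_is_ideal (s : seq D) : is_ideal (gen_ideal s).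
Proof.
split.
- by exists (fun _ => 0); rewrite big1 // => i _; rewrite mul0r.
- move=> a b [c ->] [c' ->]; exists (fun i => c i + c' i).
  by rewrite -big_split; apply: eq_bigr => i _; rewrite mulrDl.
- move=> d a [c ->]; exists (fun i => d * c i).
  by rewrite mulr_sumr; apply: eq_bigr => i _; rewrite mulrA.
Qed.

Variable V : lmodType K.

Lemma scaleK (d e : D) (x : V) : inK d *: (inK e *: x) = inK (d * e) *: x.
Proof. by rewrite scalerA tofracM. Qed.

Lemma span_mem (g : seq V) v : v \in g -> span_fg g v.
Proof.
move=> vg; have lt : (index v g < size g)%N by rewrite index_mem.
exists (fun i : 'I_(size g) => ((i : nat) == index v g)%:R).
rewrite (bigD1 (Ordinal lt)) //= eqxx tofrac1 scale1r big1 ?addr0 ?nth_index //.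
move=> i /eqP ne; suff -> : ((i : nat) == index v g) = false by rewrite tofrac0 scale0r.
by apply/negbTE; apply: contra_not_neq ne => h; apply: val_inj.
Qed.

Lemma span_Dsub (g : seq V) : is_Dsubmod (span_fg g).
Proof.
split.
- by exists (fun _ => 0); rewrite big1 // => i _; rewrite tofrac0 scale0r.
- move=> a b [c ->] [c' ->]; exists (fun i => c i + c' i).
  by rewrite -big_split; apply: eq_bigr => i _; rewrite tofracD scalerDl.
- move=> d a [c ->]; exists (fun i => d * c i).
  by rewrite scaler_sumr; apply: eq_bigr => i _; rewrite scaleK.
Qed.

Lemma span_ind (g : seq V) (N : V -> Prop) : is_Dsubmod N ->
  (forall v, v \in g -> N v) -> forall x, span_fg g x -> N x.
Proof.
move=> [N0 ND NM] Hg x [c ->]; elim/big_ind: _ => // i _.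
by apply: NM; apply: Hg; apply: mem_nth.
Qed.

Lemma wcl_gen (N : V -> Prop) s x : is_Dsubmod N -> isGV s ->
  (forall y, y \in s -> N (inK y *: x)) -> wcl N x.
Proof.
move=> [N0 ND NM] gv H; exists s; split => //.
apply: (gen_ideal_ind (P := fun j => N (inK j *: x))).
- by rewrite tofrac0 scale0r.
- by move=> a b ha hb; rewrite tofracD scalerDl; apply: ND.
- by move=> d y ys; rewrite -scaleK; apply: NM; apply: H.
Qed.

Lemma wcl_sub (N : V -> Prop) x : is_Dsubmod N -> N x -> wcl N x.
Proof.
move=> hN Nx; apply: (wcl_gen hN GV1) => y; rewrite inE => /eqP ->.
by rewrite tofrac1 scale1r.
Qed.

Lemma wcl_mono (N N' : V -> Prop) : (forall x, N x -> N' x) ->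
  forall x, wcl N x -> wcl N' x.
Proof. by move=> h x [s [gv H]]; exists s; split => // j /H /h. Qed.

Lemma wcl_Dsub (N : V -> Prop) : is_Dsubmod N -> is_Dsubmod (wcl N).
Proof.
move=> hN; have [N0 ND NM] := hN; split.
- by apply: wcl_sub.
- move=> x y [s1 [g1 h1]] [s2 [g2 h2]].
  apply: (wcl_gen hN (GVmul g1 g2)) => z /allpairsP [[a b] [/= ha hb ->]].
  rewrite scalerDr; apply: ND.
  + by rewrite mulrC -scaleK; apply: NM; apply/h1/gen_mem.
  + by rewrite -scaleK; apply: NM; apply/h2/gen_mem.
- move=> d x [s [g h]]; exists s; split => // j /h hj.
  by rewrite scaleK mulrC -scaleK; apply: NM.
Qed.

Lemma wcl_idem (N : V -> Prop) x : is_Dsubmod N -> wcl (wcl N) x -> wcl N x.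
Proof.
move=> hN [s1 [g1 h1]]; have [N0 ND NM] := hN.
have [T [gT hT]] : exists T, isGV T /\ forall y, y \in s1 -> forall u, u \in T ->
    N (inK u *: (inK y *: x)).
  apply: (@collect (fun y u => N (inK u *: (inK y *: x)))).
    by move=> y u d /= h; rewrite -scaleK; apply: NM.
  move=> y ys; have [T [gT hT]] := h1 y (gen_mem ys).
  by exists T; split => // u /gen_mem /hT.
apply: (wcl_gen hN (GVmul g1 gT)) => z /allpairsP [[a b] [/= ha hb ->]].
by rewrite mulrC -scaleK; apply: hT.
Qed.

Lemma wcl_wmod (N : V -> Prop) : is_Dsubmod N -> is_wmod (wcl N).
Proof.
move=> hN; split; first exact: wcl_Dsub.
move=> x; split; first exact: wcl_idem.
by apply: wcl_sub; apply: wcl_Dsub.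
Qed.


Lemma SM_fin (M L : V -> Prop) : is_SM M -> is_wsubmod M L ->
  exists g, (forall v, v \in g -> L v) /\ forall x, L x -> wcl (span_fg g) x.
Proof.
move=> [[hMD hMw] acc] [[hLD hLw] LM].
apply: NNPP => nH.
have H : forall g, exists x, (forall v, v \in g -> L v) ->
    L x /\ ~ wcl (span_fg g) x.
  move=> g; case: (classic (forall v, v \in g -> L v)) => hg; last first.
    by exists 0 => /hg.
  apply: NNPP => nx; apply: nH; exists g; split => // x Lx.
  by apply: NNPP => nw; apply: nx; exists x.
pose f g := proj1_sig (constructive_indefinite_description _ (H g)).
have hf g : (forall v, v \in g -> L v) -> L (f g) /\ ~ wcl (span_fg g) (f g).
  exact: (proj2_sig (constructive_indefinite_description _ (H g))).
pose G n := iter n (fun g => f g :: g) [::].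
have GL n : forall v, v \in G n -> L v.
  elim: n => [|n IH] v //=; rewrite inE => /orP [/eqP -> |]; last exact: IH.
  by have [] := hf _ IH.
have hw : forall n, is_wsubmod M (wcl (span_fg (G n))).
  move=> n; split; first by apply: wcl_wmod; exact: span_Dsub.
  move=> x hx; apply/hMw; apply: wcl_mono hx.
  by apply: span_ind => // v /GL /LM.
have hc : forall n x, wcl (span_fg (G n)) x -> wcl (span_fg (G n.+1)) x.
  move=> n; apply: wcl_mono; apply: span_ind; first exact: span_Dsub.
  by move=> v vG; apply: span_mem; rewrite /= inE vG orbT.
have [n0 hn0] := acc _ hw hc.
have [h1 _] := hn0 n0.+1 (leqnSn _) (f (G n0)).
have [_ ] := hf _ (GL n0); apply; apply: h1.
by apply: wcl_sub; [exact: span_Dsub | apply: span_mem; exact: mem_head].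
Qed.

Lemma SM_S_SM (M : V -> Prop) (S : D -> Prop) : is_SM M -> S 1 -> is_S_SM S M.
Proof.
move=> hSM S1; split; first by case: hSM.
move=> L hL; have [g [gL H]] := SM_fin hSM hL.
exists 1; split => //; exists g; split; first by move=> v /gL; case: hL => _; apply.
split; first by move=> x /H; rewrite tofrac1 scale1r.
apply: wcl_mono; apply: span_ind => //; by case: hL => [[]].
Qed.


Definition goodI (I Q : D -> Prop) :=
  [/\ is_ideal Q, (forall x, I x -> Q x) & (forall s, isGV s -> ~ forall y, y \in s -> Q y)].

Lemma Zorn_good (I : D -> Prop) : goodI I I ->
  exists Q, goodI I Q /\ forall B, goodI I B -> (forall z, Q z -> B z) -> forall z, B z -> Q z.
Proof.
move=> gI.
pose P := fun X : D -> Prop => goodI I X \/ (forall z, ~ X z).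
have := @classical_sets.Zorn_bigcup D P.
case.
- move=> F FP Ftot.
  case: (classic (exists X, F X /\ goodI I X)) => [[X0 [FX0 gX0]] | nG]; last first.
    right => z [X FX Xz]; have [gX|eX] := FP X FX; last exact: (eX z).
    by apply: nG; exists X.
  have goodF : forall X z, F X -> X z -> goodI I X.
    by move=> X z FX Xz; have [//|eX] := FP X FX; case: (eX z).
  have two : forall X1 X2 z1 z2, F X1 -> F X2 -> X1 z1 -> X2 z2 ->
      exists X, [/\ F X, X z1 & X z2].
    move=> X1 X2 z1 z2 F1 F2 h1 h2; have [s12|s21] := Ftot X1 X2 F1 F2.
    + by exists X2; split => //; apply: s12.
    + by exists X1; split => //; apply: s21.
  left; split.
  + split.
    * by exists X0 => //; case: gX0 => [[]].
    * move=> a b [X1 F1 h1] [X2 F2 h2]; have [X [FX ha hb]] := two _ _ _ _ F1 F2 h1 h2.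
      by exists X => //; have [[_ XD _] _ _] := goodF X a FX ha; apply: XD.
    * move=> d a [X FX ha]; exists X => //.
      by have [[_ _ XM] _ _] := goodF X a FX ha; apply: XM.
  + by move=> x Ix; exists X0 => //; case: gX0 => _ h _; apply: h.
  + move=> s gs hs.
    have : exists X, [/\ F X, goodI I X & forall y, y \in s -> X y].
      elim: s {gs} hs => [|y s IH] hs; first by exists X0.
      have [X [FX gX hX]] := IH (fun z zs => hs z (ltac:(by rewrite inE zs orbT))).
      have [Y FY Yy] := hs y (mem_head _ _).
      have [XY|YX] := Ftot X Y FX FY.
      * exists Y; split => //; first exact: (goodF Y y).
        by move=> z; rewrite inE => /orP [/eqP -> // | /hX /XY].
      * exists X; split => //.
        by move=> z; rewrite inE => /orP [/eqP -> | /hX //]; apply: YX.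
    by move=> [X [_ [_ _ hX] hXs]]; apply: (hX s gs).
- move=> A [PA Amax].
  have gA : goodI I A.
    have [//|eA] := PA; exfalso; apply: (Amax I); last by left.
    split; first by move=> z /eA.
    by move=> h; apply: (eA 0); apply: h; case: gI => [[]].
  exists A; split => // B gB AB z Bz; apply: NNPP => nAz.
  apply: (Amax B); last by left.
  by split => // h; apply: nAz; apply: h.
Qed.


Lemma Zmax (I : D -> Prop) : goodI I I ->
  exists Q, [/\ is_prime_wideal Q, is_max_wideal Q & forall x, I x -> Q x].
Proof.
move=> gI; have [Q [gQ Qmax]] := Zorn_good gI.
have [[Q0 QD QM] IQ QGV] := gQ.
have QMr : forall a d, Q a -> Q (a * d) by move=> a d h; rewrite mulrC; apply: QM.
have Q1 : ~ Q 1 by move=> h; apply: (QGV _ GV1) => y; rewrite inE => /eqP ->.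
have Qcl : forall z, (exists t, isGV t /\ forall y, y \in t -> Q (z * y)) -> Q z.
  pose Q' := fun z => exists t, isGV t /\ forall y, y \in t -> Q (z * y).
  have QQ' : forall z, Q z -> Q' z.
    by move=> z Qz; exists [:: 1]; split; [exact: GV1 | move=> y _; apply: QMr].
  suff gQ' : goodI I Q' by move=> z Q'z; apply: (Qmax Q' gQ' QQ').
  split.
  - split; first exact: QQ'.
    + move=> a b [t1 [g1 h1]] [t2 [g2 h2]]; exists [seq x * y | x <- t1, y <- t2].
      split; first exact: GVmul.
      move=> z /allpairsP [[x y] [/= hx hy ->]].
      rewrite mulrDl; apply: QD.
      * by rewrite mulrA; apply: QMr; apply: h1.
      * by rewrite mulrCA; apply: QM; apply: h2.
    + move=> d a [t [g h]]; exists t; split => // y yt.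
      by rewrite -mulrA; apply: QM; apply: h.
  - by move=> x /IQ /QQ'.
  - move=> t gt ht.
    have [T [gT hT]] : exists T, isGV T /\ forall y, y \in t -> forall u, u \in T -> Q (y * u).
      apply: (@collect (fun y u => Q (y * u))).
        by move=> y u d /= h; rewrite mulrCA; apply: QM.
      by move=> y /ht [T [gT hT]]; exists T.
    apply: (QGV _ (GVmul gt gT)) => z /allpairsP [[x y] [/= hx hy ->]].
    exact: hT.
have Qw : is_wideal Q.
  split; first by split.
  move=> x; split.
  - move=> [s [gs hs]].
    have [d xd] : isD x.
      move: gs => /GV_char; apply => y ys.
      by have [p [_ ->]] := hs y (gen_mem ys); exists p.
    subst x; exists d; split => //; apply: Qcl; exists s; split => // y ys.
    by have [p [Qp /esym]] := hs y (gen_mem ys); rewrite -tofracM => /inK_inj <-.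
  - move=> [p [Qp ->]]; exists [:: 1]; split; first exact: GV1.
    move=> j _; exists (p * j); split; first exact: QMr.
    by rewrite tofracM.
exists Q; split => //.
- split => // a b Qab; case: (classic (Q a)) => Qa; [by left | right].
  pose Qa' := fun z => exists q c, Q q /\ z = q + c * a.
  have gQa : ~ goodI I Qa'.
    move=> g; apply: Qa; apply: (Qmax Qa' g).
      by move=> z Qz; exists z, 0; rewrite mul0r addr0.
    by exists 0, 1; rewrite mul1r add0r.
  have [t [gt ht]] : exists t, isGV t /\ forall y, y \in t -> Qa' y.
    apply: NNPP => nt; apply: gQa; split.
    - split; first by exists 0, 0; rewrite mul0r addr0.
      + move=> u v [q1 [c1 [h1 ->]]] [q2 [c2 [h2 ->]]]; exists (q1 + q2), (c1 + c2).
        by split; [apply: QD | rewrite mulrDl addrACA].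
      + move=> d u [q [c [h ->]]]; exists (d * q), (d * c).
        by split; [apply: QM | rewrite mulrDr mulrA].
    - by move=> x /IQ Qx; exists x, 0; rewrite mul0r addr0.
    - by move=> s gs hs; apply: nt; exists s.
  apply: Qcl; exists t; split => // y /ht [q [c [hq ->]]].
  rewrite mulrDr; apply: QD; first by apply: QM.
  by rewrite mulrCA (mulrC b); apply: QM.
- split => // Q2 [hQ2 hQ2w] nQ21 QQ2.
  apply: (Qmax Q2) => //; split => //.
    by move=> x /IQ /QQ2.
  move=> s gs hs; apply: nQ21.
  have [p [Q2p hp]] : exists p, Q2 p /\ 1 = inK p.
    apply/hQ2w; exists s; split => // j js; exists j; split.
      exact: (ideal_gen hQ2 hs).
    by rewrite mul1r.
  have e : p = 1 by apply: inK_inj; rewrite -hp tofrac1.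
  by rewrite -e.
Qed.


Lemma span_cat_l (g1 g2 : seq V) x : span_fg g1 x -> span_fg (g1 ++ g2) x.
Proof.
apply: span_ind; first exact: span_Dsub.
by move=> v vg; apply: span_mem; rewrite mem_cat vg.
Qed.

Lemma span_cat_r (g1 g2 : seq V) x : span_fg g2 x -> span_fg (g1 ++ g2) x.
Proof.
apply: span_ind; first exact: span_Dsub.
by move=> v vg; apply: span_mem; rewrite mem_cat vg orbT.
Qed.

Lemma B_SM (M : V -> Prop) : is_wmod M ->
  (forall Q, is_prime_wideal Q -> is_max_wideal Q -> is_S_SM (fun d => ~ Q d) M) ->
  is_SM M.
Proof.
move=> hM HQ; split => // L hL hC.
have LD n : is_Dsubmod (L n) by case: (hL n) => [[]].
have mono : forall a b, (a <= b)%N -> forall x, L a x -> L b x.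
  move=> a b /subnKC <-; elim: (b - a)%N => [|k IH] x; first by rewrite addn0.
  by move=> /IH; rewrite addnS; apply: hC.
pose U x := exists n, L n x.
have UL : forall (T : eqType) (h : T -> V) (s : seq T), (forall y, y \in s -> U (h y)) ->
    exists n, forall y, y \in s -> L n (h y).
  move=> T h; elim => [|y s IH] hs; first by exists 0%N.
  have [n1 h1] := hs y (mem_head _ _).
  have [n2 h2] := IH (fun z zs => hs z (ltac:(by rewrite inE zs orbT))).
  exists (maxn n1 n2) => z; rewrite inE => /orP [/eqP -> | zs].
  - by apply: (mono n1) => //; exact: leq_maxl.
  - by apply: (mono n2); [exact: leq_maxr | exact: h2].
have two : forall x y, U x -> U y -> exists n, L n x /\ L n y.
  move=> x y Ux Uy.
  have hxy : forall z, z \in [:: x; y] -> U (id z).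
    by move=> z; rewrite !inE => /orP [/eqP -> | /eqP ->].
  have [n hn] := UL _ id _ hxy.
  by exists n; split; apply: hn; rewrite !inE eqxx ?orbT.
have UD : is_Dsubmod U.
  split.
  - by exists 0%N; case: (LD 0%N).
  - move=> x y Ux Uy; have [n [hx hy]] := two x y Ux Uy.
    by exists n; case: (LD n) => _ hD _; apply: hD.
  - by move=> d x [n hx]; exists n; case: (LD n) => _ _ hD; apply: hD.
have UM : forall x, U x -> M x by move=> x [n]; case: (hL n) => _; apply.
have Uw : is_wsubmod M U.
  split => //; split => // x; split; last exact: wcl_sub.
  move=> [s [gs hs]].
  have [n hn] := UL _ (fun y => inK y *: x) s (fun y ys => hs y (gen_mem ys)).
  exists n; case: (hL n) => [[_ hw] _]; apply/hw.
  exact: (wcl_gen (LD n) gs hn).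
pose I (s : D) := exists g, (forall v, v \in g -> U v) /\
  forall x, U x -> wcl (span_fg g) (inK s *: x).
have Icat : forall s1 s2 g1 g2, (forall v, v \in g1 -> U v) -> (forall v, v \in g2 -> U v) ->
    (forall x, U x -> wcl (span_fg g1) (inK s1 *: x)) ->
    (forall x, U x -> wcl (span_fg g2) (inK s2 *: x)) ->
    [/\ forall v, v \in g1 ++ g2 -> U v,
        forall x, U x -> wcl (span_fg (g1 ++ g2)) (inK s1 *: x) &
        forall x, U x -> wcl (span_fg (g1 ++ g2)) (inK s2 *: x)].
  move=> s1 s2 g1 g2 u1 u2 h1 h2; split.
  - by move=> v; rewrite mem_cat => /orP [/u1 | /u2].
  - by move=> x /h1; apply: wcl_mono => y; apply: span_cat_l.
  - by move=> x /h2; apply: wcl_mono => y; apply: span_cat_r.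
have [t [gt ht]] : exists t, isGV t /\ forall y, y \in t -> I y.
  apply: NNPP => nt.
  have gI : goodI I I.
    split; last by move=> s gs hs; apply: nt; exists s.
    - split.
      + exists [::]; split => // x _; rewrite tofrac0 scale0r.
        by apply: wcl_sub; [exact: span_Dsub | case: (span_Dsub [::])].
      + move=> a b [g1 [u1 h1]] [g2 [u2 h2]].
        have [u h1' h2'] := Icat a b g1 g2 u1 u2 h1 h2.
        exists (g1 ++ g2); split => // x Ux; rewrite tofracD scalerDl.
        by case: (wcl_Dsub (span_Dsub (g1 ++ g2))) => _ hD _; apply: hD; [apply: h1' | apply: h2'].
      + move=> d a [g [u h]]; exists g; split => // x Ux; rewrite -scaleK.
        by case: (wcl_Dsub (span_Dsub g)) => _ _ hD; apply: hD; apply: h.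
    - by [].
  have [Q [pQ mQ IQ]] := Zmax gI.
  have [_ hS] := HQ Q pQ mQ.
  have [s [nQs [g [gM [h1 h2]]]]] := hS U Uw.
  apply: nQs; apply: IQ; exists g; split => // v vg.
  have [[_ hUw] _] := Uw.
  apply/hUw; apply: h2; apply: wcl_sub; first exact: span_Dsub.
  exact: span_mem.
have [g [gU hg]] : exists g, (forall v, v \in g -> U v) /\
    forall y, y \in t -> forall x, U x -> wcl (span_fg g) (inK y *: x).
  elim: t {gt} ht => [|y t IH] ht; first by exists [::].
  have [g1 [u1 h1]] := ht y (mem_head _ _).
  have [g2 [u2 h2]] := IH (fun z zs => ht z (ltac:(by rewrite inE zs orbT))).
  exists (g1 ++ g2).
  have [u h1' _] := Icat y y g1 g1 u1 u1 h1 h1.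
  split; first by move=> v; rewrite mem_cat => /orP [/u1 | /u2].
  move=> z; rewrite inE => /orP [/eqP -> | zs] x Ux.
  - by apply: wcl_mono (h1 x Ux) => w; apply: span_cat_l.
  - by apply: wcl_mono (h2 z zs x Ux) => w; apply: span_cat_r.
have [n hn] := UL _ id g gU.
exists n => m nm x; split; last exact: mono.
move=> Lmx; have Ux : U x by exists m.
have : wcl (span_fg g) x.
  apply: wcl_idem; first exact: span_Dsub.
  apply: (wcl_gen (wcl_Dsub (span_Dsub g)) gt) => y yt.
  exact: hg.
move=> /(wcl_mono (span_ind (LD n) hn)).
by case: (hL n) => [[_ hw] _] /hw.
Qed.

End Aux.

Theorem proposition3p4 (D : idomainType) (V : lmodType {fraction D})
  (M : V -> Prop) :
  is_wmod M ->
  (is_SM M <-> (forall P : D -> Prop, is_prime_wideal P -> is_P_SM P M)) /\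
  (is_SM M <-> (forall m : D -> Prop, is_max_wideal m -> is_P_SM m M)).
Proof.
move=> hM; split; split.
- by move=> hSM P [_ P1 _]; apply: SM_S_SM.
- by move=> H; apply: B_SM => // Q pQ _; apply: H.
- by move=> hSM m [_ m1 _]; apply: SM_S_SM.
- by move=> H; apply: B_SM => // Q _ mQ; apply: H.
Qed.
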